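(* Let $\beta\ge0$, $0<a\le1+\beta$, and $x$ real with $0\le x\le\frac{1+\beta}{a}x<1$. For integers $j,k\ge0$ define $$\alpha_{j,k}=\frac{(1-j)_k}{k!}B^{(j)}_k(0)\,(1+\beta)^{-k},\qquad \gamma_{j,k}=(-1)^k\frac{(j+1)_k}{k!}B^{(-j)}_k(0)\,a^{-k}.$$ Then for every positive integer $n$ and every $t>0$, $$\left|{}_2F_1\!\left(\begin{matrix}1,t(1+\beta)\\ at+1\end{matrix};x\right)-\sum_{i=0}^{n-1}\sum_{j=0}^{i}\sum_{k=0}^\infty\frac{\gamma_{k,j}\alpha_{k,i-j}}{t^i}\left(\frac{1+\beta}{a}x\right)^k\right|\le\frac{(2n)!}{2}\frac{(1+\beta)x\,(a+(1+\beta)x)}{a^{n+2}\left(1-\frac{(1+\beta)x}{a}\right)^{2n+1}}\frac1{t^n},$$ and consequently, as $t\to\infty$, one has the asymptotic series $${}_2F_1\!\left(\begin{matrix}1,t(1+\beta)\\ at+1\end{matrix};x\right)\sim\sum_{i=0}^\infty t^{-i}\left(\sum_{j=0}^{i}\sum_{k=0}^\infty\gamma_{k,j}\alpha_{k,i-j}\left(\frac{1+\beta}{a}x\right)^k\right).$$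
   Context: $(q)_0=1$, $(q)_n=q(q+1)\cdots(q+n-1)$. ${}_2F_1\!\left(\begin{matrix}a_1,a_2\\ d\end{matrix};x\right)=\sum_{n\ge0}\frac{(a_1)_n(a_2)_n}{(d)_n}\frac{x^n}{n!}$. The generalized Bernoulli numbers $B^{(j)}_k(0)$ (for integer $j$, possibly negative) are defined by $\left(\frac{s}{e^s-1}\right)^j=\sum_{k=0}^\infty\frac{s^k}{k!}B^{(j)}_k(0)$ for $|s|<2\pi$. (With these definitions, $\frac{((1+\beta)t)_j}{((1+\beta)t)^j}=\sum_k\alpha_{j,k}t^{-k}$ and, for $at>j$, $\frac{(at)^j}{(at+1)_j}=\sum_k\gamma_{j,k}t^{-k}$.) *)

(* Defs.v *)
From Stdlib Require Import Reals ZArith.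
From Coquelicot Require Import Coquelicot.
Open Scope R_scope.

Fixpoint poch (q : R) (n : nat) : R :=
  match n with
  | O => 1
  | S m => poch q m * (q + INR m)
  end.

Definition hyp2F1_terms (a1 a2 d x : R) : nat -> R :=
  fun n => poch a1 n * poch a2 n / poch d n * x ^ n / INR (fact n).

Definition hyp2F1 (a1 a2 d x : R) : R := Series (hyp2F1_terms a1 a2 d x).

Definition bern_gen_fun (j : Z) (s : R) : R :=
  if Req_EM_T s 0 then 1 else powerRZ (s / (exp s - 1)) j.

(* Generalized Bernoulli numbers B^{(j)}_k(0): k! times the k-th Taylor
   coefficient at 0 of (s/(e^s-1))^j, i.e. its k-th derivative at 0. *)
Definition genBernoulli (j : Z) (k : nat) : R :=
  Derive_n (bern_gen_fun j) k 0.

Definition alpha (beta : R) (j k : nat) : R :=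
  poch (1 - INR j) k / INR (fact k) * genBernoulli (Z.of_nat j) k / (1 + beta) ^ k.

Definition gamma (a : R) (j k : nat) : R :=
  (-1) ^ k * (poch (INR j + 1) k / INR (fact k)) * genBernoulli (- Z.of_nat j) k / a ^ k.

Definition inner_terms (beta a x : R) (i j : nat) : nat -> R :=
  fun k => gamma a k j * alpha beta k (i - j) * ((1 + beta) / a * x) ^ k.

Definition asym_coef (beta a x : R) (i : nat) : R :=
  sum_n (fun j => Series (inner_terms beta a x i j)) i.

Definition asym_partial (beta a x t : R) (n : nat) : R :=
  match n with
  | O => 0
  | S m => sum_n (fun i => asym_coef beta a x i / t ^ i) m
  end.

(* Main.v *)
Require Import Defs.
From Stdlib Require Import Reals ZArith Lia Lra.
From Coquelicot Require Import Coquelicot.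
Open Scope R_scope.

Definition Cn (n : nat) (f : R -> R) := forall k x, (k <= n)%nat -> ex_derive_n f k x.

Lemma Derive_n_S (f : R -> R) k x : Derive_n f (S k) x = Derive_n (Derive f) k x.
Proof.
  replace (S k) with (k + 1)%nat by lia. rewrite <- Derive_n_comp.
  apply Derive_n_ext. intros; reflexivity.
Qed.

Lemma Cn_S n f : (forall x, ex_derive f x) -> Cn n (Derive f) -> Cn (S n) f.
Proof.
  intros H1 H2 k x Hk. destruct k as [|k]. exact I.
  destruct k as [|k]. simpl. apply H1.
  simpl. apply ex_derive_ext with (f := Derive_n (Derive f) k).
  intros t. rewrite <- Derive_n_S. reflexivity.
  apply (H2 (S k) x). lia.
Qed.

Lemma Cn_ex n f : Cn (S n) f -> forall x, ex_derive f x.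
Proof. intros H x. apply (H 1%nat x). lia. Qed.

Lemma Cn_D n f : Cn (S n) f -> Cn n (Derive f).
Proof.
  intros H k x Hk. destruct k as [|k]. exact I.
  simpl. apply ex_derive_ext with (f := Derive_n f (S k)).
  intros t. apply Derive_n_S.
  apply (H (S (S k)) x). lia.
Qed.

Lemma Cn_le m n f : (m <= n)%nat -> Cn n f -> Cn m f.
Proof. intros H1 H2 k x Hk. apply H2. lia. Qed.

Lemma Cn_ext n f g : (forall x, f x = g x) -> Cn n f -> Cn n g.
Proof. intros H1 H2 k x Hk. apply ex_derive_n_ext with f. exact H1. apply H2, Hk. Qed.

Lemma Cn_plus n f g : Cn n f -> Cn n g -> Cn n (fun x => f x + g x).
Proof.
  intros Hf Hg k x Hk. apply ex_derive_n_plus; apply filter_forall; intros y j Hj;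
  [apply Hf | apply Hg]; lia.
Qed.

Lemma Cn_scal n c f : Cn n f -> Cn n (fun x => c * f x).
Proof. intros Hf k x Hk. apply ex_derive_n_scal_l. apply Hf, Hk. Qed.

Lemma Cn_const n c : Cn n (fun _ => c).
Proof. intros k x Hk. apply ex_derive_n_const. Qed.

Lemma Cn_id n : Cn n (fun x => x).
Proof.
  induction n. intros k x Hk. replace k with 0%nat by lia. exact I.
  apply Cn_S. intros; auto_derive; auto.
  apply Cn_ext with (fun _ => 1). intros x. rewrite Derive_id. reflexivity.
  apply Cn_const.
Qed.

Lemma Cn_mult n : forall f g, Cn n f -> Cn n g -> Cn n (fun x => f x * g x).
Proof.
  induction n; intros f g Hf Hg.
  intros k x Hk. replace k with 0%nat by lia. exact I.
  apply Cn_S.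
  intros x. apply (ex_derive_mult f g).
  apply (Cn_ex n f Hf). apply (Cn_ex n g Hg).
  apply Cn_ext with (fun x => Derive f x * g x + f x * Derive g x).
  intros x. rewrite Derive_mult. reflexivity.
  apply (Cn_ex n f Hf). apply (Cn_ex n g Hg).
  apply Cn_plus. apply IHn. apply Cn_D; assumption. apply Cn_le with (S n). lia. exact Hg.
  apply IHn. apply Cn_le with (S n). lia. exact Hf. apply Cn_D; assumption. 
Qed.

Lemma Cn_inv n : forall g, (forall m, Cn m g) -> (forall x, g x <> 0) -> Cn n (fun x => / g x).
Proof.
  induction n; intros g Hg H0.
  intros k x Hk. replace k with 0%nat by lia. exact I.
  apply Cn_S.
  intros x. apply ex_derive_inv. apply (Cn_ex 0 g (Hg 1%nat)). apply H0.
  apply Cn_ext with (fun x => (-1) * (Derive g x * (/ g x * / g x))).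
  intros x. rewrite Derive_inv. field. apply H0. apply (Cn_ex 0 g (Hg 1%nat)). apply H0.
  apply Cn_scal. apply Cn_mult. apply Cn_D, Hg. apply Cn_mult; apply IHn; assumption.
Qed.
Lemma Cn_exp n : forall h, Cn n h -> Cn n (fun x => exp (h x)).
Proof.
  induction n; intros h Hh.
  intros k x Hk. replace k with 0%nat by lia. exact I.
  apply Cn_S.
  intros x. apply ex_derive_comp. apply ex_derive_Reals_1, derivable_pt_exp.
  apply (Cn_ex n h Hh).
  apply Cn_ext with (fun x => Derive h x * exp (h x)).
  intros x. rewrite (Derive_comp exp h). f_equal. symmetry. apply is_derive_unique.
  apply is_derive_Reals, derivable_pt_lim_exp.
  apply ex_derive_Reals_1, derivable_pt_exp. apply (Cn_ex n h Hh).
  apply Cn_mult. apply Cn_D, Hh. apply IHn. apply Cn_le with (S n). lia. exact Hh.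
Qed.

Lemma Cn_ln n : forall g, (forall m, Cn m g) -> (forall x, 0 < g x) -> Cn n (fun x => ln (g x)).
Proof.
  destruct n; intros g Hg H0.
  intros k x Hk. replace k with 0%nat by lia. exact I.
  apply Cn_S.
  intros x. apply ex_derive_comp. eexists. apply is_derive_ln. apply H0.
  apply (Cn_ex 0 g (Hg 1%nat)).
  apply Cn_ext with (fun x => Derive g x * / g x).
  intros x. rewrite (Derive_comp ln g). f_equal. symmetry. apply is_derive_unique.
  apply is_derive_Reals, derivable_pt_lim_ln. apply H0.
  eexists. apply is_derive_ln. apply H0.
  apply (Cn_ex 0 g (Hg 1%nat)).
  apply Cn_mult. apply Cn_D, Hg. apply Cn_inv. exact Hg. intros x; specialize (H0 x); lra.
Qed.

Definition gco (n : nat) : R := / INR (fact (S n)).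
Definition gg (s : R) : R := PSeries gco s.

Lemma gco_rad : CV_radius gco = p_infty.
Proof.
  apply CV_radius_infinite_DAlembert.
  intros n. unfold gco. apply Rinv_neq_0_compat. apply not_0_INR. apply fact_neq_0.
  apply is_lim_seq_ext with (fun n => / INR (n + 2)).
  intros n. unfold gco. replace (n+2)%nat with (S (S n)) by lia.
  change (fact (S (S n))) with (S (S n) * fact (S n))%nat.
  rewrite mult_INR.
  replace (/ (INR (S (S n)) * INR (fact (S n))) / / INR (fact (S n))) with (/ INR (S (S n))).
  rewrite Rabs_pos_eq. reflexivity. left; apply Rinv_0_lt_compat, lt_0_INR; lia.
  field. split. apply not_0_INR. apply fact_neq_0. apply not_0_INR. lia.
  replace (Finite 0) with (Rbar_inv p_infty) by reflexivity.
  apply is_lim_seq_inv. 2: discriminate.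
  apply (is_lim_seq_incr_n INR 2 p_infty). apply is_lim_seq_INR.
Qed.

Lemma gg_in s : Rbar_lt (Rabs s) (CV_radius gco).
Proof. rewrite gco_rad. exact I. Qed.

Lemma gg_smooth m : Cn m gg.
Proof. intros k x Hk. apply ex_derive_n_PSeries. apply gg_in. Qed.

Lemma gg_exp s : s * gg s = exp s - 1.
Proof.
  rewrite exp_Reals.
  rewrite (PSeries_decr_1 (fun n => / INR (fact n))).
  unfold gg. simpl. replace (/ 1) with 1 by field. unfold PS_decr_1.
  replace (fun n => / INR (fact (S n))) with gco by reflexivity. ring.
  apply CV_radius_inside.
  replace (CV_radius (fun n => / INR (fact n))) with p_infty. exact I.
  symmetry. apply CV_radius_infinite_DAlembert.
  intros n. apply Rinv_neq_0_compat. apply not_0_INR. apply fact_neq_0.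
  apply is_lim_seq_ext with (fun n => / INR (n + 1)).
  intros n. replace (n+1)%nat with (S n) by lia.
  change (fact (S n)) with (S n * fact n)%nat.
  rewrite mult_INR.
  replace (/ (INR (S n) * INR (fact n)) / / INR (fact n)) with (/ INR (S n)).
  rewrite Rabs_pos_eq. reflexivity. left; apply Rinv_0_lt_compat, lt_0_INR; lia.
  field. split. apply not_0_INR. apply fact_neq_0. apply not_0_INR. lia.
  replace (Finite 0) with (Rbar_inv p_infty) by reflexivity.
  apply is_lim_seq_inv. 2: discriminate.
  apply (is_lim_seq_incr_n INR 1 p_infty). apply is_lim_seq_INR.
Qed.

Lemma gg_0 : gg 0 = 1.
Proof. unfold gg. rewrite PSeries_0. unfold gco. simpl. field. Qed.

Lemma gg_pos s : 0 < gg s.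
Proof.
  destruct (Req_dec s 0) as [->|Hs]. rewrite gg_0; lra.
  assert (H := gg_exp s).
  destruct (Rlt_or_le 0 s) as [Hp|Hn].
  - assert (1 < exp s). { rewrite <- exp_0. apply exp_increasing. exact Hp. }
    apply Rmult_lt_reg_l with s. exact Hp. lra.
  - assert (exp s < 1). { rewrite <- exp_0. apply exp_increasing. lra. }
    assert (s < 0) by lra.
    destruct (Rle_or_lt (gg s) 0); auto. nra.
Qed.

Lemma gg_deriv s : gg s + s * Derive gg s = exp s.
Proof.
  assert (E : Derive (fun s => s * gg s) s = Derive (fun s => exp s - 1) s).
  { apply Derive_ext. apply gg_exp. }
  rewrite Derive_mult in E. rewrite Derive_id in E.
  rewrite Derive_minus in E. rewrite Derive_const in E.
  replace (Derive exp s) with (exp s) in E. lra.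
  symmetry; apply is_derive_unique, is_derive_exp.
  eexists; apply is_derive_exp. apply ex_derive_const. apply ex_derive_id.
  apply (Cn_ex 0 gg (gg_smooth 1) s).
Qed.

Definition fj (j : Z) (s : R) : R := exp (- IZR j * ln (gg s)).

Lemma bern_fj j s : bern_gen_fun j s = fj j s.
Proof.
  unfold bern_gen_fun, fj. destruct (Req_EM_T s 0) as [->|Hs].
  - rewrite gg_0, ln_1, Rmult_0_r, exp_0. reflexivity.
  - assert (Hg := gg_pos s). assert (He := gg_exp s).
    replace (s / (exp s - 1)) with (/ gg s).
    rewrite powerRZ_Rpower. unfold Rpower. rewrite ln_Rinv by exact Hg. f_equal. ring.
    apply Rinv_0_lt_compat, Hg.
    rewrite <- He. field. split; auto. lra.
Qed.

Lemma fj_smooth j m : Cn m (fj j).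
Proof.
  unfold fj. apply Cn_exp. apply Cn_scal. apply Cn_ln. apply gg_smooth. apply gg_pos.
Qed.

Lemma fj_ode j s :
  s * Derive (fj j) s = IZR j * fj j s - IZR j * (s * fj j s) - IZR j * fj (j + 1) s.
Proof.
  assert (Hg := gg_pos s). assert (He := gg_exp s). assert (Hd := gg_deriv s).
  assert (Hex : ex_derive gg s) by apply (Cn_ex 0 gg (gg_smooth 1) s).
  assert (D : Derive (fj j) s = (- IZR j) * (Derive gg s / gg s) * fj j s).
  { unfold fj. apply is_derive_unique. auto_derive. split; auto.  
    change (Derive (fun x => gg x) s) with (Derive gg s). unfold Rdiv. ring. }
  assert (F : fj (j + 1) s = fj j s / gg s).
  { unfold fj. rewrite plus_IZR. replace (- (IZR j + 1) * ln (gg s)) with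
      (- IZR j * ln (gg s) + - ln (gg s)) by ring.
    rewrite exp_plus, exp_Ropp, exp_ln by exact Hg. field. lra. }
  rewrite D, F.
  replace (s * (- IZR j * (Derive gg s / gg s) * fj j s)) with
    (- IZR j * fj j s * (s * Derive gg s) / gg s) by (field; lra).
  replace (s * Derive gg s) with (exp s - gg s) by lra.
  replace (exp s) with (1 + s * gg s) by lra.
  field. lra.
Qed.

Definition smooth (f : R -> R) := forall k, Cn k f.

Lemma Cn_minus n f g : Cn n f -> Cn n g -> Cn n (fun x => f x - g x).
Proof.
  intros Hf Hg. apply Cn_ext with (fun x => f x + (-1) * g x).
  intros x; ring. apply Cn_plus. exact Hf. apply Cn_scal. exact Hg.
Qed.

Lemma Dn_minus n f g x : smooth f -> smooth g ->
  Derive_n (fun y => f y - g y) n x = Derive_n f n x - Derive_n g n x.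
Proof.
  intros Hf Hg. apply Derive_n_minus; apply filter_forall; intros y k Hk;
  [apply (Hf n) | apply (Hg n)]; exact Hk.
Qed.

Lemma Dn_plus n f g x : smooth f -> smooth g ->
  Derive_n (fun y => f y + g y) n x = Derive_n f n x + Derive_n g n x.
Proof.
  intros Hf Hg. apply Derive_n_plus; apply filter_forall; intros y k Hk;
  [apply (Hf n) | apply (Hg n)]; exact Hk.
Qed.

Lemma smooth_D f : smooth f -> smooth (Derive f).
Proof. intros H k. apply Cn_D, H. Qed.

Lemma smooth_xmul f : smooth f -> smooth (fun s => s * f s).
Proof. intros H k. apply Cn_mult. apply Cn_id. apply H. Qed.

Lemma Dn_xmul m : forall h, smooth h -> forall x,
  Derive_n (fun s => s * h s) (S m) x = x * Derive_n h (S m) x + INR (S m) * Derive_n h m x.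
Proof.
  induction m; intros h Hh x.
  - simpl. rewrite Derive_mult. rewrite Derive_id. change (fun x0 : R => h x0) with h. ring.
    apply ex_derive_id. apply (Cn_ex 0 h (Hh 1%nat)).
  - rewrite Derive_n_S.
    rewrite (Derive_n_ext _ (fun s => h s + s * Derive h s)).
    rewrite Dn_plus. rewrite IHm. rewrite !Derive_n_S. rewrite (S_INR (S m)). ring.
    apply smooth_D, Hh. exact Hh. apply smooth_xmul, smooth_D, Hh.
    intros t. rewrite Derive_mult. rewrite Derive_id. ring.
    apply ex_derive_id. apply (Cn_ex 0 h (Hh 1%nat)).
Qed.

Lemma genB_eq j m : genBernoulli j m = Derive_n (fj j) m 0.
Proof. unfold genBernoulli. apply Derive_n_ext. apply bern_fj. Qed.

Lemma genB_0 j : genBernoulli j 0 = 1.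
Proof. rewrite genB_eq. simpl. unfold fj. rewrite gg_0, ln_1, Rmult_0_r, exp_0. reflexivity. Qed.

Lemma genB_zero m : genBernoulli 0 (S m) = 0.
Proof.
  rewrite genB_eq. rewrite (Derive_n_ext _ (fun _ => 1)). apply Derive_n_const.
  intros t. unfold fj. simpl. rewrite Ropp_0, Rmult_0_l, exp_0. reflexivity.
Qed.

Lemma fjs j : smooth (fj j).
Proof. intros k. apply fj_smooth. Qed.

Lemma genB_rec j m : IZR j * genBernoulli (j + 1) (S m)
  = (IZR j - INR (S m)) * genBernoulli j (S m) - IZR j * INR (S m) * genBernoulli j m.
Proof.
  rewrite !genB_eq.
  assert (E : Derive_n (fun s => s * Derive (fj j) s) (S m) 0 =
    Derive_n (fun s => (IZR j * fj j s - IZR j * (s * fj j s)) - IZR j * fj (j + 1) s) (S m) 0).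
  { apply Derive_n_ext. apply fj_ode. }
  rewrite Dn_xmul in E by (apply smooth_D, fjs).
  rewrite (Dn_minus (S m) (fun s => IZR j * fj j s - IZR j * (s * fj j s))) in E.
  rewrite (Dn_minus (S m) (fun s => IZR j * fj j s)) in E.
  rewrite !Derive_n_scal_l in E.
  rewrite (Dn_xmul m (fj j) (fjs j)) in E.
  rewrite <- !Derive_n_S in E.
  rewrite !Rmult_0_l, !Rplus_0_l in E.
  set (D1 := Derive_n (fj (j + 1)) (S m) 0) in *.
  set (D := Derive_n (fj j) (S m) 0) in *.
  set (D0 := Derive_n (fj j) m 0) in *.
  set (J := IZR j) in *. set (M := INR (S m)) in *.
  replace (J * D1) with (J * D - J * (M * D0) - M * D) by (rewrite E; ring). ring.
  intros k; apply Cn_scal, fj_smooth.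
  intros k; apply Cn_scal, smooth_xmul, fjs.
  intros k; apply Cn_minus. apply Cn_scal, fj_smooth. apply Cn_scal, smooth_xmul, fjs.
  intros k; apply Cn_scal, fj_smooth.
Qed.

Definition Aco (k m : nat) : R :=
  poch (1 - INR k) m / INR (fact m) * genBernoulli (Z.of_nat k) m.
Definition Gco (k m : nat) : R :=
  (-1) ^ m * (poch (INR k + 1) m / INR (fact m)) * genBernoulli (- Z.of_nat k) m.

Lemma alpha_Aco beta k m : alpha beta k m = Aco k m / (1 + beta) ^ m.
Proof. reflexivity. Qed.
Lemma gamma_Gco a k m : gamma a k m = Gco k m / a ^ m.
Proof. reflexivity. Qed.

Lemma poch_front q m : poch q (S m) = q * poch (q + 1) m.
Proof.
  induction m. simpl. ring.
  change (poch q (S (S m))) with (poch q (S m) * (q + INR (S m))).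
  rewrite IHm. change (poch (q+1) (S m)) with (poch (q + 1) m * (q + 1 + INR m)).
  rewrite S_INR. ring.
Qed.

Lemma fact_S_R m : INR (fact (S m)) = INR (S m) * INR (fact m).
Proof. change (fact (S m)) with (S m * fact m)%nat. apply mult_INR. Qed.

Lemma fact_nz m : INR (fact m) <> 0.
Proof. apply not_0_INR, fact_neq_0. Qed.

Lemma Aco_0 k : Aco k 0 = 1.
Proof. unfold Aco. rewrite genB_0. simpl. field. Qed.
Lemma Gco_0 k : Gco k 0 = 1.
Proof. unfold Gco. rewrite genB_0. simpl. field. Qed.
Lemma Aco_zero m : Aco 0 (S m) = 0.
Proof. unfold Aco. simpl Z.of_nat. rewrite genB_zero. ring. Qed.
Lemma Gco_zero m : Gco 0 (S m) = 0.
Proof. unfold Gco. simpl Z.of_nat. change (- 0)%Z with 0%Z. rewrite genB_zero. ring. Qed.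

Lemma Aco_rec k m : Aco (S k) (S m) = Aco k (S m) + INR k * Aco k m.
Proof.
  unfold Aco.
  assert (Hr := genB_rec (Z.of_nat k) m).
  rewrite <- INR_IZR_INZ in Hr.
  replace (Z.of_nat k + 1)%Z with (Z.of_nat (S k)) in Hr by lia.
  replace (1 - INR (S k)) with (- INR k) by (rewrite S_INR; ring).
  rewrite poch_front. replace (- INR k + 1) with (1 - INR k) by ring.
  change (poch (1 - INR k) (S m)) with (poch (1 - INR k) m * (1 - INR k + INR m)).
  rewrite !fact_S_R.
  set (B1 := genBernoulli (Z.of_nat (S k)) (S m)) in *.
  set (B := genBernoulli (Z.of_nat k) (S m)) in *.
  set (B0 := genBernoulli (Z.of_nat k) m) in *.
  set (P := poch (1 - INR k) m).
  assert (HS : INR (S m) <> 0) by (apply not_0_INR; lia).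
  assert (HF := fact_nz m).
  replace (- INR k * P / (INR (S m) * INR (fact m)) * B1) with
    (- P / (INR (S m) * INR (fact m)) * (INR k * B1)) by (field; auto).
  rewrite Hr. rewrite S_INR in *. field. split; auto.
Qed.

Lemma Gco_rec k m : Gco (S k) (S m) = Gco k (S m) - INR (S k) * Gco (S k) m.
Proof.
  unfold Gco.
  assert (Hr := genB_rec (- Z.of_nat (S k)) m).
  replace (- Z.of_nat (S k) + 1)%Z with (- Z.of_nat k)%Z in Hr by lia.
  rewrite opp_IZR, <- INR_IZR_INZ in Hr.
  replace (INR (S k) + 1) with (INR k + 1 + 1) by (rewrite S_INR; ring).
  change (poch (INR k + 1 + 1) (S m)) with (poch (INR k + 1 + 1) m * (INR k + 1 + 1 + INR m)).
  rewrite (poch_front (INR k + 1)).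
  rewrite !fact_S_R.
  set (B1 := genBernoulli (- Z.of_nat (S k)) (S m)) in *.
  set (B := genBernoulli (- Z.of_nat k) (S m)) in *.
  set (B0 := genBernoulli (- Z.of_nat (S k)) m) in *.
  set (P := poch (INR k + 1 + 1) m).
  assert (HS : INR (S m) <> 0) by (apply not_0_INR; lia).
  assert (HF := fact_nz m).
  rewrite S_INR in *.
  assert (Hk : INR k + 1 + 1 + INR m <> 0).
  { assert (0 <= INR k) by apply pos_INR. assert (0 <= INR m) by apply pos_INR. lra. }
  assert (E : B1 = ((INR k + 1) * B + (INR k + 1) * (INR m + 1) * B0) / (INR k + 1 + 1 + INR m)).
  { apply (Rmult_eq_reg_l (INR k + 1 + 1 + INR m)). 2: exact Hk.
    field_simplify. 2: exact Hk. rewrite !S_INR in Hr. lra. }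
  rewrite E. simpl pow. rewrite S_INR. field. repeat split; auto.
Qed.

Definition conv (f g : nat -> R) (n : nat) : R := sum_f_R0 (fun j => f j * g (n - j)%nat) n.
Definition sh (f : nat -> R) (m : nat) : R := match m with O => 0 | S m' => f m' end.
Definition dl (m : nat) : R := match m with O => 1 | _ => 0 end.

Lemma conv_ext f1 f2 g1 g2 n : (forall m, f1 m = f2 m) -> (forall m, g1 m = g2 m) ->
  conv f1 g1 n = conv f2 g2 n.
Proof. intros H1 H2. unfold conv. apply sum_eq. intros i _. rewrite H1, H2. reflexivity. Qed.

Lemma conv_sh_r f g n : conv f (sh g) n = sh (conv f g) n.
Proof.
  unfold conv. destruct n as [|n]. simpl. ring.
  rewrite tech5. replace (S n - S n)%nat with 0%nat by lia. simpl sh at 2. rewrite Rmult_0_r, Rplus_0_r.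
  apply sum_eq. intros i Hi. replace (S n - i)%nat with (S (n - i)) by lia. reflexivity.
Qed.

Lemma conv_sh_l f g n : conv (sh f) g n = sh (conv f g) n.
Proof.
  unfold conv. destruct n as [|n]. simpl. ring.
  rewrite decomp_sum by lia. simpl pred. simpl sh at 1. rewrite Rmult_0_l, Rplus_0_l.
  simpl sh. apply sum_eq. intros i Hi. reflexivity.
Qed.

Lemma conv_lin_r f g h c n : conv f (fun m => g m + c * h m) n = conv f g n + c * conv f h n.
Proof.
  unfold conv. rewrite scal_sum, <- plus_sum. apply sum_eq. intros i _. ring.
Qed.

Lemma conv_lin_l f g h c n : conv (fun m => g m + c * h m) f n = conv g f n + c * conv h f n.
Proof.
  unfold conv. rewrite scal_sum, <- plus_sum. apply sum_eq. intros i _. ring.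
Qed.

Lemma conv_dl_r f n : conv f dl n = f n.
Proof.
  unfold conv. destruct n as [|n]. simpl. ring.
  rewrite tech5. replace (S n - S n)%nat with 0%nat by lia. simpl dl at 2.
  rewrite (sum_eq _ (fun _ => 0)). rewrite sum_cte. ring.
  intros i Hi. replace (S n - i)%nat with (S (n - i)) by lia. simpl. ring.
Qed.

Lemma conv_dl_l f n : conv dl f n = f n.
Proof.
  unfold conv. destruct n as [|n]. simpl. ring.
  rewrite decomp_sum by lia. simpl pred.
  rewrite (sum_eq _ (fun _ => 0)). rewrite sum_cte. simpl. ring.
  intros i Hi. simpl. ring.
Qed.

Lemma sh_uniq X Y d : (forall n, X n + d * sh X n = Y n + d * sh Y n) -> forall n, X n = Y n.
Proof.
  intros H n. induction n.
  - specialize (H 0%nat). simpl in H. lra.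
  - specialize (H (S n)). simpl in H. rewrite IHn in H. lra.
Qed.

Definition al (b : R) k m := Aco k m / b ^ m.
Definition ga (a : R) k m := Gco k m / a ^ m.
Definition rr a b k := conv (ga a k) (al b k).
Definition qq (a b : R) k m := match m with
  | O => 1 | S m' => (- (INR (S k) / a)) ^ m' * (INR k / b - INR (S k) / a) end.

Lemma al_rec b k m : b <> 0 -> al b (S k) m = al b k m + INR k / b * sh (al b k) m.
Proof.
  intros Hb. unfold al. destruct m. simpl. rewrite !Aco_0. field; try exact Hb.
  simpl sh. rewrite Aco_rec. simpl pow. field. split; auto. apply pow_nonzero; auto.
Qed.

Lemma ga_rec a k m : a <> 0 -> ga a (S k) m + INR (S k) / a * sh (ga a (S k)) m = ga a k m.
Proof.
  intros Ha. unfold ga. destruct m. simpl. rewrite !Gco_0. field; try exact Ha.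
  simpl sh. rewrite Gco_rec. simpl pow. field. split; auto. apply pow_nonzero; auto.
Qed.

Lemma qq_prop a b k m : a <> 0 ->
  qq a b k m + INR (S k) / a * sh (qq a b k) m = dl m + INR k / b * sh dl m.
Proof.
  intros Ha. destruct m as [|[|m]]; simpl. ring. ring.
  ring.
Qed.

Lemma rr_rec a b k n : a <> 0 -> b <> 0 -> rr a b (S k) n = conv (rr a b k) (qq a b k) n.
Proof.
  intros Ha Hb. revert n. apply (sh_uniq _ _ (INR (S k) / a)). intros n.
  transitivity (rr a b k n + INR k / b * sh (rr a b k) n).
  - unfold rr. rewrite <- conv_sh_l. rewrite <- conv_lin_l.
    rewrite (conv_ext _ (ga a k) _ (fun m => al b k m + INR k / b * sh (al b k) m)).
    rewrite conv_lin_r. rewrite conv_sh_r. reflexivity.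
    intros m. apply ga_rec; auto. intros m. apply al_rec; auto.
  - rewrite <- conv_sh_r. rewrite <- conv_lin_r.
    rewrite (conv_ext _ (rr a b k) _ (fun m => dl m + INR k / b * sh dl m)).
    rewrite conv_lin_r, conv_dl_r, conv_sh_r. destruct n; simpl; rewrite ?conv_dl_r; ring.
    intros; reflexivity. intros m. apply qq_prop; auto.
Qed.

Lemma ga_0 a m : ga a 0 m = dl m.
Proof. unfold ga. destruct m. simpl. rewrite Gco_0. field. rewrite Gco_zero. simpl. unfold Rdiv. ring. Qed.
Lemma al_0 b m : al b 0 m = dl m.
Proof. unfold al. destruct m. simpl. rewrite Aco_0. field. rewrite Aco_zero. simpl. unfold Rdiv. ring. Qed.

Lemma rr_0 a b n : rr a b 0 n = dl n.
Proof.
  unfold rr. rewrite (conv_ext _ dl _ dl). apply conv_dl_r. apply ga_0. apply al_0.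
Qed.

Definition pk (a b : R) k u := (1 + INR k / b * u) / (1 + INR (S k) / a * u).
Fixpoint Rk (a b : R) k u := match k with O => 1 | S k' => Rk a b k' u * pk a b k' u end.
Fixpoint fsum (f : nat -> R) n := match n with O => 0 | S n' => fsum f n' + f n' end.
Definition Tk a b k n u := fsum (fun i => rr a b k i * u ^ i) n.
Definition Pk a b k n u := fsum (fun i => qq a b k i * u ^ i) n.
Fixpoint Hb k n := match k with
  | O => dl n | S k' => sum_f_R0 (fun l => Hb k' l * INR (S k') ^ (n - l)) n end.

Lemma fsum_S f n : fsum f (S n) = sum_f_R0 f n.
Proof. induction n. simpl. ring. simpl fsum in *. rewrite IHn. simpl. ring. Qed.

Lemma fsum_ext f g n : (forall i, (i < n)%nat -> f i = g i) -> fsum f n = fsum g n.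
Proof. induction n; intros H. reflexivity. simpl. rewrite IHn, H. reflexivity. lia. intros; apply H; lia. Qed.

Lemma fsum_plus f g n : fsum (fun i => f i + g i) n = fsum f n + fsum g n.
Proof. induction n. simpl; ring. simpl. rewrite IHn. ring. Qed.
Lemma fsum_minus f g n : fsum (fun i => f i - g i) n = fsum f n - fsum g n.
Proof. induction n. simpl; ring. simpl. rewrite IHn. ring. Qed.
Lemma fsum_scal f c n : fsum (fun i => f i * c) n = fsum f n * c.
Proof. induction n. simpl; ring. simpl. rewrite IHn. ring. Qed.
Lemma fsum_abs f n : Rabs (fsum f n) <= fsum (fun i => Rabs (f i)) n.
Proof.
  induction n. simpl. rewrite Rabs_R0. lra.
  simpl. eapply Rle_trans. apply Rabs_triang. lra.
Qed.
Lemma fsum_le f g n : (forall i, (i < n)%nat -> f i <= g i) -> fsum f n <= fsum g n.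
Proof. induction n; intros H. simpl; lra. simpl. apply Rplus_le_compat. apply IHn. intros; apply H; lia. apply H; lia. Qed.

Lemma Hb_nonneg k n : 0 <= Hb k n.
Proof.
  revert n. induction k; intros n. simpl. destruct n; simpl; lra.
  change (Hb (S k) n) with (sum_f_R0 (fun l => Hb k l * INR (S k) ^ (n - l)) n). apply cond_pos_sum. intros l. apply Rmult_le_pos. apply IHk. apply pow_le, pos_INR.
Qed.

Section Rem.
End Rem.

Lemma p_rem_gen (c d u : R) m : 0 <= d -> 0 <= u ->
  (1 + c * u) / (1 + d * u) - fsum (fun i => match i with O => 1 | S m' => (- d) ^ m' * (c - d) end * u ^ i) (S m) =
  (c - d) * (- d) ^ m * u ^ (S m) / (1 + d * u).
Proof.
  intros Hd Hu.
  assert (Hp : 1 + d * u <> 0) by nra.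
  induction m.
  - cbn [fsum pow]. field. exact Hp.
  - cbn [fsum] in *.
    match goal with |- ?A - (?B + ?C) = _ => replace (A - (B + C)) with ((A - B) - C) by ring end.
    rewrite IHm. cbn [pow]. field. exact Hp.
Qed.

Lemma p_rem a b k u m : 0 < a -> 0 < b -> 0 <= u ->
  pk a b k u - Pk a b k (S m) u =
  (INR k / b - INR (S k) / a) * (- (INR (S k) / a)) ^ m * u ^ (S m) / (1 + INR (S k) / a * u).
Proof.
  intros Ha Hb Hu. unfold pk, Pk. rewrite <- p_rem_gen.
  try (f_equal; apply fsum_ext; intros i _; destruct i; reflexivity).
  apply Rdiv_le_0_compat; [apply pos_INR | lra]. exact Hu.
Qed.

Lemma p_bounds a b k u : 0 < a -> a <= b -> 0 <= u -> 0 < pk a b k u <= 1.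
Proof.
  intros Ha Hab Hu. unfold pk.
  assert (H1 : 0 <= INR k / b * u).
  { apply Rmult_le_pos; [apply Rdiv_le_0_compat; [apply pos_INR|lra] | exact Hu]. }
  assert (H2 : INR k / b * u <= INR (S k) / a * u).
  { apply Rmult_le_compat_r. exact Hu. rewrite S_INR.
    apply Rle_trans with (INR k / a). unfold Rdiv. apply Rmult_le_compat_l. apply pos_INR.
    apply Rinv_le_contravar; lra. unfold Rdiv. apply Rmult_le_compat_r. left; apply Rinv_0_lt_compat; lra. lra. }
  split. apply Rdiv_lt_0_compat; lra.
  apply Rmult_le_reg_r with (1 + INR (S k) / a * u). lra.
  unfold Rdiv at 1. rewrite Rmult_assoc, Rinv_l by lra. lra.
Qed.

Lemma cd_bound a b k : 0 < a -> a <= b -> Rabs (INR k / b - INR (S k) / a) <= INR (S k) / a.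
Proof.
  intros Ha Hab.
  assert (H0 : 0 <= INR k / b) by (apply Rdiv_le_0_compat; [apply pos_INR | lra]).
  assert (H2 : INR k / b <= INR (S k) / a).
  { rewrite S_INR.
    apply Rle_trans with (INR k / a). unfold Rdiv. apply Rmult_le_compat_l. apply pos_INR.
    apply Rinv_le_contravar; lra. unfold Rdiv. apply Rmult_le_compat_r. left; apply Rinv_0_lt_compat; lra. lra. }
  rewrite Rabs_left1 by lra. lra.
Qed.

Lemma q_bound a b k m : 0 < a -> a <= b -> Rabs (qq a b k m) <= (INR (S k) / a) ^ m.
Proof.
  intros Ha Hab. destruct m. simpl. rewrite Rabs_R1. lra.
  cbn [qq]. rewrite Rabs_mult, <- RPow_abs, Rabs_Ropp.
  rewrite (Rabs_pos_eq (INR (S k) / a)) by (apply Rdiv_le_0_compat; [apply pos_INR | lra]).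
  cbn [pow]. rewrite Rmult_comm. apply Rmult_le_compat_r. apply pow_le.
  apply Rdiv_le_0_compat; [apply pos_INR | lra]. apply cd_bound; assumption.
Qed.

Lemma pP_bound a b k u m : 0 < a -> a <= b -> 0 <= u -> (0 < m)%nat ->
  Rabs (pk a b k u - Pk a b k m u) <= (INR (S k) / a) ^ m * u ^ m.
Proof.
  intros Ha Hab Hu Hm. destruct m as [|m]. lia.
  rewrite p_rem by lra.
  assert (Hd : 0 <= INR (S k) / a) by (apply Rdiv_le_0_compat; [apply pos_INR | lra]).
  assert (Hp : 1 <= 1 + INR (S k) / a * u) by nra.
  match goal with |- Rabs (?A / ?B) <= ?C => change (Rabs (A * / B) <= C) end.
  rewrite !Rabs_mult, <- !RPow_abs, Rabs_Ropp, (Rabs_pos_eq u) by lra.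
  rewrite (Rabs_pos_eq (INR (S k) / a)) by exact Hd.
  rewrite (Rabs_pos_eq (/ (1 + INR (S k) / a * u))) by (left; apply Rinv_0_lt_compat; lra).
  assert (Hc := cd_bound a b k Ha Hab).
  assert (Hi : / (1 + INR (S k) / a * u) <= 1).
  { rewrite <- Rinv_1. apply Rinv_le_contravar; lra. }
  cbn [pow].
  assert (0 <= (INR (S k) / a) ^ m) by (apply pow_le; exact Hd).
  assert (0 <= u ^ m) by (apply pow_le; exact Hu).
  assert (0 <= Rabs (INR k / b - INR (S k) / a)) by apply Rabs_pos.
  assert (0 <= / (1 + INR (S k) / a * u)) by (left; apply Rinv_0_lt_compat; lra).
  set (C := Rabs (INR k / b - INR (S k) / a)) in *. set (D := INR (S k) / a) in *.
  set (X := D ^ m) in *. set (Y := u ^ m) in *. set (Z := / (1 + D * u)) in *.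
  assert (C * X * (u * Y) * Z <= C * X * (u * Y)).
  { rewrite <- (Rmult_1_r (C * X * (u * Y))) at 2. apply Rmult_le_compat_l. 
    repeat apply Rmult_le_pos; lra. exact Hi. }
  assert (C * X * (u * Y) <= D * X * (u * Y)).
  { apply Rmult_le_compat_r. apply Rmult_le_pos; lra.
    apply Rmult_le_compat_r; lra. }
  lra.
Qed.

Lemma prod_T a b k n u : a <> 0 -> b <> 0 ->
  Tk a b (S k) n u = fsum (fun l => rr a b k l * u ^ l * Pk a b k (n - l) u) n.
Proof.
  intros Ha Hb. induction n.
  - reflexivity.
  - unfold Tk in *. cbn [fsum]. rewrite IHn.
    replace (S n - n)%nat with 1%nat by lia.
    rewrite (fsum_ext (fun l => rr a b k l * u ^ l * Pk a b k (S n - l) u)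
                      (fun l => rr a b k l * u ^ l * Pk a b k (n - l) u +
                               rr a b k l * qq a b k (n - l) * u ^ n)).
    rewrite fsum_plus. rewrite rr_rec by assumption.
    unfold conv. rewrite <- fsum_S. cbn [fsum].
    rewrite (fsum_scal (fun i => rr a b k i * qq a b k (n - i)) (u ^ n)). unfold Pk at 3. cbn [fsum pow]. rewrite Nat.sub_diag. cbn [qq]. ring.
    intros i Hi. replace (S n - i)%nat with (S (n - i)) by lia.
    unfold Pk at 1. cbn [fsum]. fold (Pk a b k (n - i) u).
    replace (u ^ n) with (u ^ i * u ^ (n - i)). ring.
    rewrite <- pow_add. f_equal. lia.
Qed.

Lemma rem_id a b k n u : a <> 0 -> b <> 0 ->
  Rk a b (S k) u - Tk a b (S k) n u =
  fsum (fun l => rr a b k l * u ^ l * (pk a b k u - Pk a b k (n - l) u)) n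
  + (Rk a b k u - Tk a b k n u) * pk a b k u.
Proof.
  intros Ha Hb. rewrite prod_T by assumption.
  rewrite (fsum_ext (fun l => rr a b k l * u ^ l * (pk a b k u - Pk a b k (n - l) u)) (fun l => rr a b k l * u ^ l * pk a b k u - rr a b k l * u ^ l * Pk a b k (n - l) u)).
  rewrite fsum_minus. rewrite fsum_scal. unfold Tk. simpl Rk. ring.
  intros; ring.
Qed.

Lemma div_pow x a m : a <> 0 -> (x / a) ^ m = x ^ m / a ^ m.
Proof. intros Ha. unfold Rdiv. rewrite Rpow_mult_distr, pow_inv. reflexivity. Qed.

Lemma term_eq1 H a x l n : (l <= n)%nat -> a <> 0 ->
  H / a ^ l * (x / a) ^ (n - l) = H * x ^ (n - l) / a ^ n.
Proof.
  intros Hl Ha. rewrite div_pow by exact Ha.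
  replace (a ^ n) with (a ^ l * a ^ (n - l)) by (rewrite <- pow_add; f_equal; lia).
  field. split; apply pow_nonzero; exact Ha.
Qed.

Lemma term_eq2 H a x u l n : (l <= n)%nat -> a <> 0 ->
  H / a ^ l * u ^ l * ((x / a) ^ (n - l) * u ^ (n - l)) = H * x ^ (n - l) * (u / a) ^ n.
Proof.
  intros Hl Ha. rewrite !div_pow by exact Ha.
  replace (a ^ n) with (a ^ l * a ^ (n - l)) by (rewrite <- pow_add; f_equal; lia).
  replace (u ^ n) with (u ^ l * u ^ (n - l)) by (rewrite <- pow_add; f_equal; lia).
  field. split; apply pow_nonzero; exact Ha.
Qed.

Lemma sum_div F n c : sum_f_R0 F n / c = sum_f_R0 (fun l => F l / c) n.
Proof. unfold Rdiv. rewrite Rmult_comm, scal_sum. apply sum_eq. intros; ring. Qed.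

Lemma fsum_dl u n : fsum (fun i => dl i * u ^ i) (S n) = 1.
Proof.
  induction n. simpl. ring. cbn [fsum] in *. rewrite IHn. simpl. ring.
Qed.

Lemma bounds a b u k : 0 < a -> a <= b -> 0 <= u ->
  (forall n, Rabs (rr a b k n) <= Hb k n / a ^ n) /\
  (forall n, Rabs (Rk a b k u - Tk a b k n u) <= Hb k n * (u / a) ^ n).
Proof.
  intros Ha Hab Hu.
  assert (Ha' : a <> 0) by lra. assert (Hb' : b <> 0) by lra.
  induction k.
  - split; intros n.
    + rewrite rr_0. cbn [Hb]. destruct n; simpl dl. rewrite Rabs_R1. simpl. lra.
      rewrite Rabs_R0. unfold Rdiv. lra.
    + cbn [Hb Rk]. unfold Tk. destruct n.
      simpl. rewrite Rminus_0_r, Rabs_R1. lra.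
      rewrite (fsum_ext _ (fun i => dl i * u ^ i)). rewrite fsum_dl. rewrite Rminus_diag, Rabs_R0.
      simpl dl. lra. intros i _. rewrite rr_0. reflexivity.
  - destruct IHk as [IH1 IH2]. split; intros n.
    + rewrite rr_rec by assumption. unfold conv.
      eapply Rle_trans. apply sum_f_R0_triangle.
      change (Hb (S k) n) with (sum_f_R0 (fun l => Hb k l * INR (S k) ^ (n - l)) n).
      rewrite sum_div.
      apply sum_Rle. intros l Hl. rewrite Rabs_mult.
      apply Rle_trans with (Hb k l / a ^ l * (INR (S k) / a) ^ (n - l)).
      apply Rmult_le_compat. apply Rabs_pos. apply Rabs_pos. apply IH1.
      apply q_bound; assumption.
      rewrite term_eq1 by assumption. lra.
    + rewrite rem_id by assumption.
      eapply Rle_trans. apply Rabs_triang.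
      assert (Hp := p_bounds a b k u Ha Hab Hu).
      apply Rle_trans with (fsum (fun l => Hb k l * INR (S k) ^ (n - l) * (u / a) ^ n) n
                            + Hb k n * (u / a) ^ n).
      apply Rplus_le_compat.
      * eapply Rle_trans. apply fsum_abs. apply fsum_le. intros l Hl.
        rewrite <- (term_eq2 _ a _ u l n) by (lia || assumption).
        rewrite !Rabs_mult. rewrite <- RPow_abs, (Rabs_pos_eq u) by exact Hu.
        apply Rmult_le_compat. apply Rmult_le_pos; [apply Rabs_pos | apply pow_le; exact Hu].
        apply Rabs_pos.
        apply Rmult_le_compat_r. apply pow_le; exact Hu. apply IH1.
        apply pP_bound; try assumption. lia.
      * rewrite Rabs_mult. rewrite (Rabs_pos_eq (pk a b k u)) by lra.
        rewrite <- (Rmult_1_r (Hb k n * (u / a) ^ n)).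
        apply Rmult_le_compat. apply Rabs_pos. lra. apply IH2. lra.
      * rewrite fsum_scal. change (Hb (S k) n) with (sum_f_R0 (fun l => Hb k l * INR (S k) ^ (n - l)) n).
        rewrite <- fsum_S. cbn [fsum]. rewrite Nat.sub_diag. simpl pow. lra.
Qed.

Fixpoint BN (M k : nat) : R := match M with
  | O => 1 | S M' => BN M' k * (INR k + INR M' + 1) / (INR M' + 1) end.

Lemma INR_pos1 n : 0 < INR n + 1.
Proof. assert (H := pos_INR n). lra. Qed.

Lemma BN_pos M k : 0 < BN M k.
Proof.
  induction M. simpl; lra. cbn [BN]. apply Rdiv_lt_0_compat. apply Rmult_lt_0_compat. exact IHM.
  assert (H1 := pos_INR k). assert (H2 := pos_INR M). lra. apply INR_pos1.
Qed.

Lemma BN_0 M : BN M 0 = 1.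
Proof. induction M. reflexivity. cbn [BN]. rewrite IHM. simpl INR. field. apply Rgt_not_eq, INR_pos1. Qed.

Lemma BN_shift M k : BN M (S k) * (INR k + 1) = BN M k * (INR k + INR M + 1).
Proof.
  induction M. simpl. ring.
  cbn [BN]. rewrite !S_INR.
  assert (H := INR_pos1 M).
  set (X := BN M (S k)) in *. set (Y := BN M k) in *.
  replace (X * (INR k + 1 + INR M + 1) / (INR M + 1) * (INR k + 1))
    with (X * (INR k + 1) * (INR k + 1 + INR M + 1) / (INR M + 1)) by (field; lra).
  rewrite IHM. field. lra.
Qed.

Lemma BN_pascal M k : BN (S M) (S k) = BN (S M) k + BN M (S k).
Proof.
  assert (Hk := INR_pos1 k). assert (HM := INR_pos1 M).
  apply (Rmult_eq_reg_r (INR k + 1)). 2: lra.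
  rewrite BN_shift. rewrite Rmult_plus_distr_r. rewrite BN_shift.
  cbn [BN]. rewrite S_INR. field. lra.
Qed.

Lemma BN_sum M k : sum_f_R0 (fun l => BN M l) k = BN (S M) k.
Proof.
  induction k. cbn [sum_f_R0]. rewrite !BN_0. reflexivity.
  rewrite tech5, IHk. rewrite BN_pascal. reflexivity.
Qed.

Lemma BN_mono M k : BN M k <= BN M (S k).
Proof.
  destruct M. simpl; lra. rewrite BN_pascal. assert (H := BN_pos M (S k)). lra.
Qed.

Lemma BN_series y M : 0 <= y < 1 -> is_series (fun k => BN M k * y ^ k) (/ (1 - y) ^ (S M)).
Proof.
  intros Hy. induction M.
  - apply is_series_ext with (fun k => y ^ k). intros; simpl; ring.
    replace (/ (1 - y) ^ 1) with (/ (1 - y)) by (f_equal; ring).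
    apply is_series_geom. rewrite Rabs_pos_eq; lra.
  - assert (G := is_series_geom y). 
    assert (Hm := is_series_mult _ _ _ _ IHM (G ltac:(rewrite Rabs_pos_eq; lra))).
    eapply is_series_ext. 2: { replace (/ (1 - y) ^ S (S M)) with (/ (1 - y) ^ S M * / (1 - y)).
      apply Hm.
      apply ex_series_ext with (fun k => BN M k * y ^ k). intros n.
      rewrite Rabs_pos_eq. reflexivity. apply Rmult_le_pos. left; apply BN_pos. apply pow_le; lra.
      eexists; exact IHM.
      apply ex_series_ext with (fun k => y ^ k). intros n.
      rewrite Rabs_pos_eq. reflexivity. apply pow_le; lra.
      eexists; apply is_series_geom. rewrite Rabs_pos_eq; lra.
      rewrite <- Rinv_mult. f_equal. cbn [pow]. ring. }
    intros n. simpl sum_f_R0. rewrite <- BN_sum.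
    rewrite (sum_eq _ (fun k => BN M k * y ^ n)). rewrite <- scal_sum. rewrite Rmult_comm. reflexivity.
    intros i Hi. rewrite Rmult_assoc, <- pow_add. f_equal. f_equal. lia.
Qed.

Lemma Hb_k0 k : Hb k 0 = 1.
Proof. induction k. reflexivity. cbn [Hb]. simpl sum_f_R0. rewrite IHk. simpl. ring. Qed.

Lemma Hb_rec k n : Hb (S k) (S n) = Hb k (S n) + INR (S k) * Hb (S k) n.
Proof.
  change (Hb (S k) (S n)) with (sum_f_R0 (fun l => Hb k l * INR (S k) ^ (S n - l)) (S n)).
  change (Hb (S k) n) with (sum_f_R0 (fun l => Hb k l * INR (S k) ^ (n - l)) n).
  rewrite tech5. rewrite Nat.sub_diag. rewrite scal_sum.
  rewrite (sum_eq (fun l => Hb k l * INR (S k) ^ (S n - l)) (fun l => Hb k l * INR (S k) ^ (n - l) * INR (S k))).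
  cbn [pow]. ring.
  intros i Hi. replace (S n - i)%nat with (S (n - i)) by lia. cbn [pow]. ring.
Qed.

Lemma Hb_1 n : Hb 1 n = 1.
Proof.
  induction n. apply Hb_k0. rewrite Hb_rec, IHn. cbn [Hb dl]. simpl INR. ring.
Qed.

Lemma Hb_mono k n : Hb k n <= Hb (S k) n.
Proof.
  destruct n. rewrite !Hb_k0. lra.
  rewrite Hb_rec. assert (H1 := Hb_nonneg (S k) n). assert (H2 := pos_INR (S k)).
  assert (0 <= INR (S k) * Hb (S k) n) by (apply Rmult_le_pos; assumption). lra.
Qed.

Definition cc (n : nat) : R := match n with O => 1 | S _ => INR (fact (2 * n)) / 2 end.

Lemma cc_ge1 n : 1 <= cc n.
Proof.
  destruct n. simpl; lra. unfold cc.
  assert (H : (2 <= fact (2 * S n))%nat).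
  { replace (2 * S n)%nat with (S (S (2 * n))) by lia. cbn [fact].
    assert (1 <= fact (2 * n))%nat by apply lt_O_fact. nia. }
  apply le_INR in H. replace (INR 2) with 2 in H by (simpl; ring). lra.
Qed.

Lemma cc_ineq n k : (INR k + 2) * cc n * (2 * INR n + 1) <= cc (S n) * (INR k + 2 * INR n + 2).
Proof.
  assert (Hk := pos_INR k). destruct n.
  - unfold cc. simpl. lra.
  - assert (E : cc (S (S n)) = cc (S n) * (2 * INR (S n) + 2) * (2 * INR (S n) + 1)).
    { unfold cc. replace (2 * S (S n))%nat with (S (S (2 * S n))) by lia.
      cbn [fact]. rewrite !mult_INR. rewrite !S_INR. rewrite mult_INR. replace (INR 2) with 2 by (simpl; ring). rewrite !S_INR. field. }
    rewrite E. assert (H1 := cc_ge1 (S n)). assert (Hn := pos_INR (S n)).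
    set (C := cc (S n)) in *. set (N := INR (S n)) in *. set (K := INR k) in *.
    assert (0 <= C * (2 * N + 1)) by nra.
    assert (K + 2 <= (2 * N + 2) * (K + 2 * N + 2)) by nra.
    nra.
Qed.

Lemma Hb_BN n : forall k, Hb (S k) n <= cc n * BN (2 * n) k.
Proof.
  induction n; intros k.
  - rewrite Hb_k0. simpl. lra.
  - induction k.
    + rewrite Hb_1, BN_0. rewrite Rmult_1_r. apply cc_ge1.
    + rewrite Hb_rec. replace (2 * S n)%nat with (S (S (2 * n))) by lia.
      rewrite (BN_pascal (S (2 * n)) k).
      replace (S (S (2 * n))) with (2 * S n)%nat in * by lia.
      assert (IH := IHn (S k)).
      apply Rle_trans with (cc (S n) * BN (2 * S n) k + INR (S (S k)) * (cc n * BN (2 * n) (S k))).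
      apply Rplus_le_compat. exact IHk. apply Rmult_le_compat_l. apply pos_INR. exact IH.
      rewrite Rmult_plus_distr_l. apply Rplus_le_compat_l.
      cbn [BN]. rewrite !mult_INR. replace (INR 2) with 2 by (simpl; ring).
      assert (Hp := BN_pos (2 * n) (S k)).
      assert (Hi := cc_ineq n k). rewrite !S_INR in *.
      set (B := BN (2 * n) (S k)) in *. set (N := INR n) in *. set (K := INR k) in *.
      assert (HN : 0 <= N) by apply pos_INR.
      apply Rmult_le_reg_r with (2 * N + 1). lra.
      replace (cc (S n) * (B * (K + 1 + 2 * N + 1) / (2 * N + 1)) * (2 * N + 1))
        with (cc (S n) * (K + 2 * N + 2) * B) by (field; lra).
      replace ((K + 1 + 1) * (cc n * B) * (2 * N + 1)) with ((K + 2) * cc n * (2 * N + 1) * B) by ring.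
      assert (Hi2 := Rmult_le_compat_r B _ _ (Rlt_le _ _ Hp) Hi). lra.
Qed.

Lemma Hb_BN_all n k : Hb k n <= cc n * BN (2 * n) k.
Proof.
  destruct k. cbn [Hb]. rewrite BN_0. assert (H := cc_ge1 n). destruct n; cbn [dl]; lra.
  eapply Rle_trans. apply Hb_BN. apply Rmult_le_compat_l.
  assert (H := cc_ge1 n); lra. apply BN_mono.
Qed.

Lemma BN_prod A B : exists C, forall k, BN A k * BN B k <= C * BN (A + B) k.
Proof.
  induction B.
  - exists 1. intros k. rewrite Nat.add_0_r. simpl. lra.
  - destruct IHB as [C HC]. exists (C * (INR (A + B) + 1) / (INR B + 1)).
    intros k. replace (A + S B)%nat with (S (A + B)) by lia. cbn [BN].
    assert (HB := INR_pos1 B). assert (HAB := INR_pos1 (A + B)).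
    assert (HkB : INR k + INR B + 1 <= INR k + INR (A + B) + 1).
    { assert (HH := le_INR B (A + B) ltac:(lia)). lra. }
    assert (H1 := HC k). assert (P1 := BN_pos A k). assert (P2 := BN_pos B k). assert (P3 := BN_pos (A + B) k).
    assert (Hk := pos_INR k).
    apply Rmult_le_reg_r with (INR B + 1). lra.
    replace (BN A k * (BN B k * (INR k + INR B + 1) / (INR B + 1)) * (INR B + 1))
      with (BN A k * BN B k * (INR k + INR B + 1)) by (field; lra).
    replace (C * (INR (A + B) + 1) / (INR B + 1) * (BN (A + B) k * (INR k + INR (A + B) + 1) / (INR (A + B) + 1)) * (INR B + 1))
      with (C * BN (A + B) k * (INR k + INR (A + B) + 1)) by (field; lra).
    apply Rmult_le_compat. apply Rmult_le_pos; lra. lra. exact H1. exact HkB.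
Qed.

Lemma Gco_bound k m : Rabs (Gco k m) <= Hb k m.
Proof.
  revert m. induction k; intros m.
  - destruct m. rewrite Gco_0. cbn [Hb]. simpl. rewrite Rabs_R1. lra.
    rewrite Gco_zero. rewrite Rabs_R0. cbn [Hb]. simpl. lra.
  - induction m. rewrite Gco_0, Hb_k0, Rabs_R1. lra.
    rewrite Gco_rec, Hb_rec. unfold Rminus. eapply Rle_trans. apply Rabs_triang. rewrite Rabs_Ropp.
    rewrite Rabs_mult, (Rabs_pos_eq (INR (S k))) by apply pos_INR.
    apply Rplus_le_compat. apply IHk. apply Rmult_le_compat_l. apply pos_INR. exact IHm.
Qed.

Lemma Aco_bound k m : Rabs (Aco k m) <= Hb k m.
Proof.
  revert m. induction k; intros m.
  - destruct m. rewrite Aco_0. cbn [Hb]. simpl. rewrite Rabs_R1. lra.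
    rewrite Aco_zero. rewrite Rabs_R0. cbn [Hb]. simpl. lra.
  - destruct m. rewrite Aco_0, Hb_k0, Rabs_R1. lra.
    rewrite Aco_rec, Hb_rec. eapply Rle_trans. apply Rabs_triang.
    rewrite Rabs_mult, (Rabs_pos_eq (INR k)) by apply pos_INR.
    apply Rplus_le_compat. apply IHk. 
    apply Rle_trans with (INR k * Hb (S k) m).
    apply Rmult_le_compat_l. apply pos_INR. eapply Rle_trans. apply IHk. apply Hb_mono.
    apply Rmult_le_compat_r. apply Hb_nonneg. rewrite S_INR; lra.
Qed.

Lemma exs_le (a b : nat -> R) : (forall n, Rabs (a n) <= b n) -> ex_series b -> ex_series a.
Proof. intros H1 H2. exact (@ex_series_le R_AbsRing R_CompleteNormedModule a b H1 H2). Qed.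

Lemma poch_1 k : poch 1 k = INR (fact k).
Proof.
  induction k. reflexivity. cbn [poch]. rewrite IHk. rewrite fact_S_R, S_INR. ring.
Qed.

Lemma poch_pos q k : 0 < q -> 0 < poch q k.
Proof.
  intros Hq. induction k. simpl; lra. cbn [poch]. apply Rmult_lt_0_compat. exact IHk.
  assert (H := pos_INR k). lra.
Qed.

Lemma poch_ratio a b t k : 0 < a -> 0 < b -> 0 < t ->
  poch (t * b) k / poch (a * t + 1) k = (b / a) ^ k * Rk a b k (/ t).
Proof.
  intros Ha Hb Ht. induction k.
  - simpl. field.
  - cbn [poch Rk pow].
    assert (P1 := poch_pos (a * t + 1) k ltac:(nra)).
    assert (Hk := pos_INR k).
    replace (poch (t * b) k * (t * b + INR k) / (poch (a * t + 1) k * (a * t + 1 + INR k)))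
      with (poch (t * b) k / poch (a * t + 1) k * ((t * b + INR k) / (a * t + 1 + INR k)))
      by (field; split; nra).
    rewrite IHk. unfold pk. rewrite S_INR.
    field. repeat split; try lra. nra. 
Qed.

Lemma term_id beta a x t k : 0 <= beta -> 0 < a -> 0 < t ->
  hyp2F1_terms 1 (t * (1 + beta)) (a * t + 1) x k = ((1 + beta) / a * x) ^ k * Rk a (1 + beta) k (/ t).
Proof.
  intros Hb Ha Ht. unfold hyp2F1_terms. rewrite poch_1.
  assert (E := poch_ratio a (1 + beta) t k Ha ltac:(lra) Ht).
  assert (P1 := poch_pos (a * t + 1) k ltac:(nra)).
  replace (INR (fact k) * poch (t * (1 + beta)) k / poch (a * t + 1) k * x ^ k / INR (fact k))
    with (poch (t * (1 + beta)) k / poch (a * t + 1) k * x ^ k)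
    by (field; repeat split; try apply fact_nz; lra).
  rewrite E. rewrite Rpow_mult_distr. ring.
Qed.

Lemma Rk_bound a b k u : 0 < a -> a <= b -> 0 <= u -> Rabs (Rk a b k u) <= 1.
Proof.
  intros Ha Hab Hu. destruct (bounds a b u k Ha Hab Hu) as [_ H2].
  specialize (H2 0%nat). unfold Tk in H2. cbn [fsum pow] in H2. rewrite Hb_k0 in H2.
  rewrite Rminus_0_r in H2. lra.
Qed.

Lemma part1 beta a x t : 0 <= beta -> 0 < a -> a <= 1 + beta -> 0 <= x -> (1 + beta) / a * x < 1 ->
  0 < t -> ex_series (hyp2F1_terms 1 (t * (1 + beta)) (a * t + 1) x).
Proof.
  intros Hb Ha Hab Hx Hy Ht.
  set (y := (1 + beta) / a * x) in *.
  assert (Hy0 : 0 <= y) by (unfold y; apply Rmult_le_pos; [apply Rdiv_le_0_compat; lra | lra]).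
  apply exs_le with (fun k => y ^ k).
  intros k.
  rewrite term_id by assumption. fold y. rewrite Rabs_mult.
  rewrite <- RPow_abs, (Rabs_pos_eq y) by exact Hy0.
  rewrite <- (Rmult_1_r (y ^ k)) at 2. apply Rmult_le_compat_l. apply pow_le; exact Hy0.
  apply Rk_bound; try assumption. left; apply Rinv_0_lt_compat; exact Ht.
  eexists. apply is_series_geom. rewrite Rabs_pos_eq; lra.
Qed.

Lemma BN_ex y M c : 0 <= y < 1 -> ex_series (fun k => c * (BN M k * y ^ k)).
Proof.
  intros Hy. apply (ex_series_scal_l c (fun k => BN M k * y ^ k)). eexists. apply BN_series; exact Hy.
Qed.

Lemma part2 beta a x i j : 0 <= beta -> 0 < a -> a <= 1 + beta -> 0 <= x -> (1 + beta) / a * x < 1 ->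
  (j <= i)%nat -> ex_series (inner_terms beta a x i j).
Proof.
  intros Hb Ha Hab Hx Hy Hji.
  set (y := (1 + beta) / a * x) in *.
  assert (Hy0 : 0 <= y) by (unfold y; apply Rmult_le_pos; [apply Rdiv_le_0_compat; lra | lra]).
  set (m := (i - j)%nat).
  destruct (BN_prod (2 * j) (2 * m)) as [C HC].
  set (K := cc j * cc m / (a ^ j * (1 + beta) ^ m) * C).
  apply exs_le with (fun k => K * (BN (2 * j + 2 * m) k * y ^ k)).
  2: apply BN_ex; lra.
  intros k.
  unfold inner_terms. rewrite gamma_Gco, alpha_Aco. fold y. fold m.
  assert (Pa : 0 < a ^ j) by (apply pow_lt; lra).
  assert (Pb : 0 < (1 + beta) ^ m) by (apply pow_lt; lra).
  rewrite !Rabs_mult. unfold Rdiv. rewrite !Rabs_mult.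
  rewrite (Rabs_pos_eq (/ a ^ j)) by (left; apply Rinv_0_lt_compat; lra).
  rewrite (Rabs_pos_eq (/ (1 + beta) ^ m)) by (left; apply Rinv_0_lt_compat; lra).
  rewrite <- RPow_abs, (Rabs_pos_eq y) by exact Hy0.
  assert (G1 := Gco_bound k j). assert (A1 := Aco_bound k m).
  assert (G2 := Hb_BN_all j k). assert (A2 := Hb_BN_all m k).
  assert (HC' := HC k).
  assert (Py : 0 <= y ^ k) by (apply pow_le; exact Hy0).
  assert (B1 := BN_pos (2 * j) k). assert (B2 := BN_pos (2 * m) k).
  assert (c1 := cc_ge1 j). assert (c2 := cc_ge1 m).
  assert (R1 : Rabs (Gco k j) * Rabs (Aco k m) <= cc j * cc m * C * BN (2 * j + 2 * m) k).
  { apply Rle_trans with ((cc j * BN (2 * j) k) * (cc m * BN (2 * m) k)).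
    apply Rmult_le_compat; try apply Rabs_pos; lra.
    replace (cc j * BN (2 * j) k * (cc m * BN (2 * m) k)) with (cc j * cc m * (BN (2 * j) k * BN (2 * m) k)) by ring.
    apply Rle_trans with (cc j * cc m * (C * BN (2 * j + 2 * m) k)).
    apply Rmult_le_compat_l. nra. exact HC'. right; ring. }
  unfold K. unfold Rdiv. rewrite Rinv_mult.
  set (IA := / a ^ j) in *. set (IB := / (1 + beta) ^ m) in *.
  assert (0 < IA) by (apply Rinv_0_lt_compat; lra).
  assert (0 < IB) by (apply Rinv_0_lt_compat; lra).
  set (G := Rabs (Gco k j)) in *. set (A := Rabs (Aco k m)) in *.
  replace (G * IA * (A * IB) * y ^ k) with ((G * A) * (IA * IB * y ^ k)) by ring.
  replace (cc j * cc m * (IA * IB) * C * (BN (2 * j + 2 * m) k * y ^ k))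
    with ((cc j * cc m * C * BN (2 * j + 2 * m) k) * (IA * IB * y ^ k)) by ring.
  apply Rmult_le_compat_r. apply Rmult_le_pos. apply Rmult_le_pos; lra. exact Py. exact R1.
Qed.

Lemma swap (f : nat -> nat -> R) N : (forall j, (j <= N)%nat -> ex_series (f j)) ->
  ex_series (fun k => sum_f_R0 (fun j => f j k) N) /\
  sum_f_R0 (fun j => Series (f j)) N = Series (fun k => sum_f_R0 (fun j => f j k) N).
Proof.
  induction N; intros H.
  - simpl. split. apply H. lia. reflexivity.
  - destruct IHN as [E1 E2]. intros j Hj; apply H; lia.
    assert (E3 := H (S N) (le_n _)).
    split.
    + apply ex_series_ext with (fun k => plus (sum_f_R0 (fun j => f j k) N) (f (S N) k)).
      intros k. reflexivity. exact (@ex_series_plus R_AbsRing R_NormedModule _ _ E1 E3).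
    + simpl sum_f_R0. rewrite E2. rewrite <- Series_plus by assumption. reflexivity.
Qed.

Lemma coef_eq beta a x i : 0 <= beta -> 0 < a -> a <= 1 + beta -> 0 <= x -> (1 + beta) / a * x < 1 ->
  ex_series (fun k => rr a (1 + beta) k i * ((1 + beta) / a * x) ^ k) /\
  asym_coef beta a x i = Series (fun k => rr a (1 + beta) k i * ((1 + beta) / a * x) ^ k).
Proof.
  intros Hb Ha Hab Hx Hy.
  assert (S := swap (inner_terms beta a x i) i).
  destruct S as [S1 S2]. intros j Hj. apply part2; assumption.
  assert (Ek : forall k, sum_f_R0 (fun j => inner_terms beta a x i j k) i
                = rr a (1 + beta) k i * ((1 + beta) / a * x) ^ k).
  { intros k. unfold rr, conv. rewrite Rmult_comm, scal_sum. apply sum_eq. intros j _.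
    unfold inner_terms. reflexivity. }
  split.
  - eapply ex_series_ext. 2: exact S1. exact Ek.
  - unfold asym_coef. rewrite sum_n_Reals. rewrite S2. apply Series_ext. exact Ek.
Qed.

Lemma partial_eq beta a x t N : 0 <= beta -> 0 < a -> a <= 1 + beta -> 0 <= x -> (1 + beta) / a * x < 1 ->
  0 < t ->
  ex_series (fun k => ((1 + beta) / a * x) ^ k * Tk a (1 + beta) k (S N) (/ t)) /\
  asym_partial beta a x t (S N) = Series (fun k => ((1 + beta) / a * x) ^ k * Tk a (1 + beta) k (S N) (/ t)).
Proof.
  intros Hb Ha Hab Hx Hy Ht.
  set (y := (1 + beta) / a * x) in *.
  assert (S := swap (fun i k => rr a (1 + beta) k i * y ^ k / t ^ i) N).
  destruct S as [S1 S2].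
  { intros j Hj. unfold Rdiv. apply ex_series_scal_r. apply coef_eq; assumption. }
  assert (Ek : forall k, sum_f_R0 (fun i => rr a (1 + beta) k i * y ^ k / t ^ i) N
                 = y ^ k * Tk a (1 + beta) k (S N) (/ t)).
  { intros k. unfold Tk. rewrite fsum_S. rewrite scal_sum. apply sum_eq. intros i _.
    rewrite pow_inv. unfold Rdiv. ring. }
  split.
  - eapply ex_series_ext. 2: exact S1. exact Ek.
  - unfold asym_partial. rewrite sum_n_Reals.
    rewrite (sum_eq _ (fun i => Series (fun k => rr a (1 + beta) k i * y ^ k / t ^ i))).
    rewrite S2. apply Series_ext. exact Ek.
    intros i _. unfold Rdiv. rewrite Series_scal_r. f_equal. apply coef_eq; assumption.
Qed.

Lemma hb_series n y : (1 <= n)%nat -> 0 <= y < 1 ->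
  ex_series (fun k => Hb k n * y ^ k) /\
  Series (fun k => Hb k n * y ^ k) <= y * cc n * / (1 - y) ^ (S (2 * n)).
Proof.
  intros Hn Hy.
  assert (Ex : ex_series (fun k => Hb k n * y ^ k)).
  { apply exs_le with (fun k => cc n * (BN (2 * n) k * y ^ k)). 2: apply BN_ex; exact Hy.
    intros k. rewrite Rabs_pos_eq. rewrite <- Rmult_assoc. apply Rmult_le_compat_r.
    apply pow_le; lra. apply Hb_BN_all.
    apply Rmult_le_pos. apply Hb_nonneg. apply pow_le; lra. }
  split. exact Ex.
  rewrite Series_incr_1 by exact Ex. destruct n as [|n]. lia.
  change (Hb 0 (S n)) with 0. rewrite Rmult_0_l, Rplus_0_l.
  rewrite <- (is_series_unique _ _ (BN_series y (2 * S n) Hy)).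
  rewrite <- Series_scal_l.
  apply Series_le.
  - intros k. split. apply Rmult_le_pos. apply Hb_nonneg. apply pow_le; lra.
    cbn [pow].
    assert (H1 := Hb_BN (S n) k).
    assert (0 <= y ^ k) by (apply pow_le; lra).
    assert (0 <= y * y ^ k) by (apply Rmult_le_pos; lra).
    replace (y * cc (S n) * (BN (2 * S n) k * y ^ k)) with (cc (S n) * BN (2 * S n) k * (y * y ^ k)) by ring.
    apply Rmult_le_compat_r. lra. exact H1.
  - apply BN_ex. exact Hy.
Qed.

Lemma part3 beta a x N t : 0 <= beta -> 0 < a -> a <= 1 + beta -> 0 <= x -> (1 + beta) / a * x < 1 ->
  0 < t ->
  Rabs (hyp2F1 1 (t * (1 + beta)) (a * t + 1) x - asym_partial beta a x t (S N))
     <= INR (fact (2 * S N)) / 2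
        * ((1 + beta) * x * (a + (1 + beta) * x))
        / (a ^ (S N + 2) * (1 - (1 + beta) * x / a) ^ (2 * S N + 1))
        * / t ^ S N.
Proof.
  intros Hbe Ha Hab Hx Hy Ht.
  destruct (partial_eq beta a x t N Hbe Ha Hab Hx Hy Ht) as [P1 P2]. rewrite P2.
  set (b := 1 + beta) in *. set (y := b / a * x) in *. set (u := / t).
  assert (Hy0 : 0 <= y) by (unfold y; apply Rmult_le_pos; [apply Rdiv_le_0_compat; lra | lra]).
  assert (Hu : 0 < u) by (apply Rinv_0_lt_compat; exact Ht).
  set (n := S N).
  assert (F1 : hyp2F1 1 (t * b) (a * t + 1) x = Series (fun k => y ^ k * Rk a b k u)).
  { unfold hyp2F1. apply Series_ext. intros k. apply term_id; assumption. }
  assert (F2 : ex_series (fun k => y ^ k * Rk a b k u)).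
  { eapply ex_series_ext. 2: apply (part1 beta a x t); assumption.
    intros k. apply term_id; assumption. }
  rewrite F1. rewrite <- Series_minus by assumption.
  destruct (hb_series n y ltac:(unfold n; lia) ltac:(lra)) as [S1 S2].
  set (bd := fun k => (u / a) ^ n * (Hb k n * y ^ k)).
  assert (Ebd : ex_series bd) by (unfold bd; apply (ex_series_scal_l ((u/a)^n) (fun k => Hb k n * y ^ k)); exact S1).
  assert (Hk : forall k, Rabs (y ^ k * Rk a b k u - y ^ k * Tk a b k n u) <= bd k).
  { intros k. unfold bd. rewrite <- Rmult_minus_distr_l, Rabs_mult.
    rewrite <- RPow_abs, (Rabs_pos_eq y) by exact Hy0.
    destruct (bounds a b u k Ha Hab (Rlt_le _ _ Hu)) as [_ B2].
    assert (0 <= y ^ k) by (apply pow_le; exact Hy0).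
    apply Rle_trans with (y ^ k * (Hb k n * (u / a) ^ n)).
    apply Rmult_le_compat_l. exact H. apply B2. right; ring. }
  eapply Rle_trans. apply Series_Rabs.
  { apply exs_le with bd. intros k. rewrite Rabs_Rabsolu. apply Hk. exact Ebd. }
  eapply Rle_trans. apply Series_le. intros k. split. apply Rabs_pos. apply Hk. exact Ebd.
  unfold bd. rewrite Series_scal_l.
  assert (Pa : 0 < (u / a) ^ n) by (apply pow_lt; apply Rdiv_lt_0_compat; lra).
  eapply Rle_trans. apply Rmult_le_compat_l. lra. exact S2.
  assert (Hy1 : 0 < 1 - y) by lra.
  replace (b * x / a) with y by (unfold y; field; lra).
  replace (b * x) with (a * y) by (unfold y; field; lra).
  replace (2 * n + 1)%nat with (S (2 * n)) by lia.
  replace (S N + 2)%nat with (n + 2)%nat by reflexivity.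
  replace (INR (fact (2 * n)) / 2) with (cc n) by reflexivity.
  rewrite pow_add. unfold u. rewrite div_pow by lra. rewrite pow_inv.
  assert (Pt : 0 < t ^ n) by (apply pow_lt; exact Ht).
  assert (Pan : 0 < a ^ n) by (apply pow_lt; exact Ha).
  assert (Py : 0 < (1 - y) ^ S (2 * n)) by (apply pow_lt; exact Hy1).
  assert (C1 := cc_ge1 n).
  set (T := t ^ n) in *. set (An := a ^ n) in *. set (Q := (1 - y) ^ S (2 * n)) in *.
  replace (cc n * (a * y * (a + a * y)) / (An * a ^ 2 * Q) * / T)
    with ((/ T / An * (y * cc n * / Q)) * (1 + y)) by (field; repeat split; lra).
  assert (0 <= / T / An * (y * cc n * / Q)).
  { apply Rmult_le_pos. apply Rmult_le_pos; left; apply Rinv_0_lt_compat; lra.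
    apply Rmult_le_pos. apply Rmult_le_pos; lra. left; apply Rinv_0_lt_compat; lra. }
  nra.
Qed.

Lemma lim_K (K : R) : is_lim (fun t => K * / t) p_infty 0.
Proof.
  replace (Finite 0) with (Rbar_mult K (Rbar_inv p_infty)).
  apply is_lim_scal_l. apply is_lim_inv. apply is_lim_id. discriminate.
  simpl. rewrite Rmult_0_r. reflexivity.
Qed.

Lemma lim_mK (K : R) : is_lim (fun t => - (K * / t)) p_infty 0.
Proof.
  replace (Finite 0) with (Rbar_opp 0).
  apply is_lim_opp. apply lim_K. simpl. rewrite Ropp_0. reflexivity.
Qed.

Lemma part4 beta a x N : 0 <= beta -> 0 < a -> a <= 1 + beta -> 0 <= x -> (1 + beta) / a * x < 1 ->
  is_lim (fun t => t ^ N * (hyp2F1 1 (t * (1 + beta)) (a * t + 1) x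
                               - asym_partial beta a x t (S N))) p_infty 0.
Proof.
  intros Hbe Ha Hab Hx Hy.
  set (K := INR (fact (2 * S N)) / 2
        * ((1 + beta) * x * (a + (1 + beta) * x))
        / (a ^ (S N + 2) * (1 - (1 + beta) * x / a) ^ (2 * S N + 1))).
  apply is_lim_le_le_loc with (fun t => - (K * / t)) (fun t => K * / t).
  2: apply lim_mK. 2: apply lim_K.
  exists 0. intros t Ht.
  assert (B := part3 beta a x N t Hbe Ha Hab Hx Hy Ht). fold K in B.
  assert (Pt : 0 < t ^ N) by (apply pow_lt; exact Ht).
  set (D := hyp2F1 1 (t * (1 + beta)) (a * t + 1) x - asym_partial beta a x t (S N)) in *.
  assert (E : t ^ N * (K * / t ^ S N) = K * / t).
  { cbn [pow]. field. split; lra. }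
  apply Rabs_le_between. rewrite Rabs_mult, (Rabs_pos_eq (t ^ N)) by lra.
  rewrite <- E. apply Rmult_le_compat_l. lra. exact B.
Qed.

Theorem theorem5 (beta a x : R) :
  0 <= beta -> 0 < a -> a <= 1 + beta ->
  0 <= x -> x <= (1 + beta) / a * x -> (1 + beta) / a * x < 1 ->
  (* the series involved converge *)
  (forall t : R, 0 < t ->
     ex_series (hyp2F1_terms 1 (t * (1 + beta)) (a * t + 1) x)) /\
  (forall i j : nat, (j <= i)%nat -> ex_series (inner_terms beta a x i j)) /\
  (* explicit error bound *)
  (forall (n : nat) (t : R), (0 < n)%nat -> 0 < t ->
     Rabs (hyp2F1 1 (t * (1 + beta)) (a * t + 1) x - asym_partial beta a x t n)
     <= INR (fact (2 * n)) / 2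
        * ((1 + beta) * x * (a + (1 + beta) * x))
        / (a ^ (n + 2) * (1 - (1 + beta) * x / a) ^ (2 * n + 1))
        * / t ^ n) /\
  (* asymptotic (Poincare) expansion as t -> +oo *)
  (forall N : nat,
     is_lim (fun t => t ^ N * (hyp2F1 1 (t * (1 + beta)) (a * t + 1) x
                               - asym_partial beta a x t (S N)))
            p_infty 0).
Proof.
  intros Hbe Ha Hab Hx Hxy Hy.
  split. intros t Ht. apply part1; assumption.
  split. intros i j Hji. apply part2; assumption.
  split. intros n t Hn Ht. destruct n as [|N]. lia. apply part3; assumption.
  intros N. apply part4; assumption.
Qed.
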